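(* Let $G$ and $H$ be graphs each having at least one edge. Then the join of $G$ and $H$ is well-bicovered if and only if each of $G$ and $H$ is both well-covered and well-bicovered, and $b(G)=b(H)=2\alpha(G)=2\alpha(H)$.
   Context: All graphs are finite and simple; ''subgraph'' means induced subgraph. $b(G)$ denotes the maximum order of an induced bipartite subgraph of $G$. A graph is well-bicovered if every vertex-inclusion-maximal induced bipartite subgraph has the same order (namely $b(G)$). A graph is well-covered if every maximal independent set has the same cardinality, namely the independence number $\alpha(G)$. The join of $G$ and $H$ is the disjoint union of $G$ and $H$ together with all edges between $V(G)$ and $V(H)$. *)

(* Defs.v *)
From mathcomp Require Import all_boot.
Set Implicit Arguments. Unset Strict Implicit. Unset Printing Implicit Defensive.

Definition simple_graph (T : finType) (e : rel T) : Prop :=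
  symmetric e /\ irreflexive e.

Definition has_edge (T : finType) (e : rel T) : Prop := exists x y, e x y.

Definition independent (T : finType) (e : rel T) (A : {set T}) : bool :=
  [forall x in A, forall y in A, ~~ e x y].

Definition ind_bipartite (T : finType) (e : rel T) (S : {set T}) : bool :=
  [exists A : {set T}, (A \subset S) && independent e A && independent e (S :\: A)].

Definition maximal_independent (T : finType) (e : rel T) (A : {set T}) : Prop :=
  maxset (independent e) A.

Definition maximal_bipartite (T : finType) (e : rel T) (S : {set T}) : Prop :=
  maxset (ind_bipartite e) S.

Definition alpha (T : finType) (e : rel T) : nat :=
  \max_(A : {set T} | independent e A) #|A|.

Definition bnum (T : finType) (e : rel T) : nat :=
  \max_(S : {set T} | ind_bipartite e S) #|S|.

Definition well_covered (T : finType) (e : rel T) : Prop :=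
  forall A : {set T}, maximal_independent e A -> #|A| = alpha e.

Definition well_bicovered (T : finType) (e : rel T) : Prop :=
  forall S : {set T}, maximal_bipartite e S -> #|S| = bnum e.

Definition join_rel (T1 T2 : finType) (e1 : rel T1) (e2 : rel T2) : rel (T1 + T2) :=
  fun u v => match u, v with
             | inl x, inl y => e1 x y
             | inr x, inr y => e2 x y
             | _, _ => true
             end.

(* Main.v *)
Require Import Defs.
From mathcomp Require Import all_boot.
From mathcomp Require Import zify.
Set Implicit Arguments. Unset Strict Implicit. Unset Printing Implicit Defensive.

Section Gen.
Variables (T : finType) (e : rel T).

Lemma indepP (A : {set T}) :
  reflect (forall x y, x \in A -> y \in A -> ~~ e x y) (independent e A).
Proof.
apply: (iffP forall_inP) => [H x y xA yA | H x xA].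
  by move/forall_inP: (H x xA); apply.
by apply/forall_inP => y yA; apply: H.
Qed.

Lemma indep_sub (A B : {set T}) : A \subset B -> independent e B -> independent e A.
Proof.
move=> sAB /indepP H; apply/indepP => x y xA yA; apply: H; exact: (subsetP sAB).
Qed.

Lemma indep0 : independent e set0.
Proof. by apply/indepP => x y; rewrite in_set0. Qed.

Lemma indep1 z : irreflexive e -> independent e [set z].
Proof. by move=> irr; apply/indepP => x y; rewrite !inE => /eqP -> /eqP ->; rewrite irr. Qed.

Lemma indep_bip (A : {set T}) : independent e A -> ind_bipartite e A.
Proof. by move=> iA; apply/existsP; exists A; rewrite subxx iA setDv indep0. Qed.

Lemma bip0 : ind_bipartite e set0.
Proof. exact: (indep_bip indep0). Qed.

Lemma bip_le_alpha (S : {set T}) : ind_bipartite e S -> #|S| <= 2 * alpha e.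
Proof.
case/existsP => A /andP[/andP[sAS iA] iD].
rewrite -(cardsID A S) (setIidPr sAS) mul2n -addnn leq_add //;
  rewrite /alpha; exact: (@leq_bigmax_cond _ (fun B : {set T} => independent e B) (fun B : {set T} => #|B|)).
Qed.

Lemma bip_triangle (S : {set T}) u v w : ind_bipartite e S ->
  u \in S -> v \in S -> w \in S -> e u v -> e u w -> e v w -> False.
Proof.
case/existsP => A /andP[/andP[sAS /indepP iA] /indepP iD] uS vS wS euv euw evw.
have dP p : p \in S -> p \notin A -> p \in S :\: A by move=> pS pA; rewrite inE pA pS.
case: (boolP (u \in A)) => uA; case: (boolP (v \in A)) => vA.
- by move: (iA _ _ uA vA); rewrite euv.
- case: (boolP (w \in A)) => wA.
    by move: (iA _ _ uA wA); rewrite euw.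
  by move: (iD _ _ (dP _ vS vA) (dP _ wS wA)); rewrite evw.
- case: (boolP (w \in A)) => wA.
    by move: (iA _ _ vA wA); rewrite evw.
  by move: (iD _ _ (dP _ uS uA) (dP _ wS wA)); rewrite euw.
- by move: (iD _ _ (dP _ uS uA) (dP _ vS vA)); rewrite euv.
Qed.

Lemma max_is_maxset (p : pred {set T}) A :
  p A -> #|A| = \max_(B | p B) #|B| -> maxset p A.
Proof.
move=> pA eA; apply/maxsetP; split=> // B pB sAB; apply/eqP.
rewrite eq_sym eqEcard sAB eA; exact: (@leq_bigmax_cond _ p (fun B : {set T} => #|B|)).
Qed.

Lemma exists_max (p : pred {set T}) :
  p set0 -> exists2 A, maxset p A & #|A| = \max_(B | p B) #|B|.
Proof.
move=> p0.
have [|A pA eA] := @eq_bigmax_cond _ p (fun B : {set T} => #|B|).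
  by apply/card_gt0P; exists set0.
by exists A => //; apply: max_is_maxset.
Qed.

Lemma maxbip_not_indep (S : {set T}) : simple_graph e -> has_edge e ->
  maxset (ind_bipartite e) S -> ~~ independent e S.
Proof.
move=> [sym irr] [x [y exy]] /maxsetP[bS mS]; apply/negP => iS.
have H z : z \in S.
  have hb : ind_bipartite e (z |: S).
    apply/existsP; exists S; rewrite subsetUr iS /=.
    apply: (indep_sub _ (indep1 z irr)).
    apply/subsetP => w; rewrite !inE; case/andP => /negbTE ->; by rewrite orbF.
  have := mS _ hb (subsetUr _ _) => <-; exact: setU11.
by move/indepP: iS => /(_ x y (H x) (H y)); rewrite exy.
Qed.

Lemma maxind_nonempty (z : T) (A : {set T}) : irreflexive e ->
  maxset (independent e) A -> A != set0.
Proof.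
move=> irr /maxsetP[iA mA]; apply/negP => /eqP A0.
have := mA _ (indep1 z irr); rewrite A0 sub0set => /(_ isT) /setP/(_ z).
by rewrite !inE eqxx.
Qed.

End Gen.

Section Join.
Variables (T1 T2 : finType) (e1 : rel T1) (e2 : rel T2).
Local Notation J := (join_rel e1 e2).

Definition U (A1 : {set T1}) (A2 : {set T2}) : {set T1 + T2} :=
  [set x | match x with inl a => a \in A1 | inr b => b \in A2 end].
Definition L (S : {set T1 + T2}) : {set T1} := [set a | inl a \in S].
Definition R (S : {set T1 + T2}) : {set T2} := [set b | inr b \in S].

Lemma UE (S : {set T1 + T2}) : S = U (L S) (R S).
Proof. by apply/setP => [[a|b]]; rewrite !inE. Qed.

Lemma LU (A1 : {set T1}) (A2 : {set T2}) : L (U A1 A2) = A1.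
Proof. by apply/setP => a; rewrite !inE. Qed.

Lemma RU (A1 : {set T1}) (A2 : {set T2}) : R (U A1 A2) = A2.
Proof. by apply/setP => a; rewrite !inE. Qed.

Lemma LD (S A : {set T1 + T2}) : L (S :\: A) = L S :\: L A.
Proof. by apply/setP => a; rewrite !inE. Qed.

Lemma RD (S A : {set T1 + T2}) : R (S :\: A) = R S :\: R A.
Proof. by apply/setP => a; rewrite !inE. Qed.

Lemma UD (A1 B1 : {set T1}) (A2 B2 : {set T2}) : U A1 A2 :\: U B1 B2 = U (A1 :\: B1) (A2 :\: B2).
Proof. by apply/setP => [[a|b]]; rewrite !inE. Qed.

Lemma subU (A1 B1 : {set T1}) (A2 B2 : {set T2}) : A1 \subset B1 -> A2 \subset B2 -> U A1 A2 \subset U B1 B2.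
Proof.
move=> s1 s2; apply/subsetP => [[a|b]]; rewrite !inE; [exact: (subsetP s1) | exact: (subsetP s2)].
Qed.

Lemma subL (A1 : {set T1}) (A2 : {set T2}) (B : {set T1 + T2}) : U A1 A2 \subset B -> A1 \subset L B.
Proof. by move=> s; apply/subsetP => a aA; rewrite inE; apply: (subsetP s); rewrite inE. Qed.

Lemma subR (A1 : {set T1}) (A2 : {set T2}) (B : {set T1 + T2}) : U A1 A2 \subset B -> A2 \subset R B.
Proof. by move=> s; apply/subsetP => a aA; rewrite inE; apply: (subsetP s); rewrite inE. Qed.

Lemma cardU (A1 : {set T1}) (A2 : {set T2}) : #|U A1 A2| = #|A1| + #|A2|.
Proof.
have -> : U A1 A2 = inl @: A1 :|: inr @: A2.
  apply/setP => [[a|b]]; rewrite !inE.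
    apply/idP/orP => [aA|[/imsetP[x xA [->]]|/imsetP[x _ //]]] //.
    by left; apply/imsetP; exists a.
  apply/idP/orP => [bA|[/imsetP[x _ //]|/imsetP[x xA [->]]]] //.
  by right; apply/imsetP; exists b.
rewrite cardsU !card_imset; [|exact: inr_inj|exact: inl_inj].
suff -> : inl @: A1 :&: inr @: A2 = set0 by rewrite cards0 subn0.
apply/setP => x; rewrite !inE.
by apply/andP => -[/imsetP[a _ ->] /imsetP[b _]].
Qed.

Lemma indepJ_L (S : {set T1 + T2}) : independent J S -> independent e1 (L S).
Proof.
move/indepP => H; apply/indepP => x y; rewrite !inE => xS yS; exact: (H _ _ xS yS).
Qed.

Lemma indepJ_R (S : {set T1 + T2}) : independent J S -> independent e2 (R S).
Proof.
move/indepP => H; apply/indepP => x y; rewrite !inE => xS yS; exact: (H _ _ xS yS).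
Qed.

Lemma indepJ1 (A : {set T1}) : independent e1 A -> independent J (U A set0).
Proof.
move/indepP => H; apply/indepP => [[a|a] [b|b]]; rewrite !inE //=; exact: H.
Qed.

Lemma indepJ2 (A : {set T2}) : independent e2 A -> independent J (U set0 A).
Proof.
move/indepP => H; apply/indepP => [[a|a] [b|b]]; rewrite !inE //=; exact: H.
Qed.

Lemma bipJ_L (S : {set T1 + T2}) : ind_bipartite J S -> ind_bipartite e1 (L S).
Proof.
case/existsP => A /andP[/andP[sAS iA] iD]; apply/existsP; exists (L A).
rewrite -LD (indepJ_L iA) (indepJ_L iD) !andbT.
by apply/subsetP => a; rewrite !inE => aA; apply: (subsetP sAS).
Qed.

Lemma bipJ_R (S : {set T1 + T2}) : ind_bipartite J S -> ind_bipartite e2 (R S).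
Proof.
case/existsP => A /andP[/andP[sAS iA] iD]; apply/existsP; exists (R A).
rewrite -RD (indepJ_R iA) (indepJ_R iD) !andbT.
by apply/subsetP => a; rewrite !inE => aA; apply: (subsetP sAS).
Qed.

Lemma bip_from1 (A : {set T1}) : ind_bipartite e1 A -> ind_bipartite J (U A set0).
Proof.
case/existsP => W /andP[/andP[sWA iW] iD]; apply/existsP; exists (U W set0).
by rewrite subU // UD setD0 indepJ1 // indepJ1.
Qed.

Lemma bip_from2 (A : {set T2}) : ind_bipartite e2 A -> ind_bipartite J (U set0 A).
Proof.
case/existsP => W /andP[/andP[sWA iW] iD]; apply/existsP; exists (U set0 W).
by rewrite subU // UD setD0 indepJ2 // indepJ2.
Qed.

Lemma bip_from_ind (A1 : {set T1}) (A2 : {set T2}) : independent e1 A1 -> independent e2 A2 ->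
  ind_bipartite J (U A1 A2).
Proof.
move=> i1 i2; apply/existsP; exists (U A1 set0).
rewrite UD setDv setD0 (indepJ1 i1) (indepJ2 i2) !andbT.
by apply: subU; rewrite ?sub0set ?subxx.
Qed.

Lemma tri_L (S : {set T1 + T2}) z : ind_bipartite J S -> z \in R S -> independent e1 (L S).
Proof.
move=> bS; rewrite inE => zS; apply/indepP => x y; rewrite !inE => xS yS.
apply/negP => exy; exact: (bip_triangle bS xS yS zS).
Qed.

Lemma tri_R (S : {set T1 + T2}) z : ind_bipartite J S -> z \in L S -> independent e2 (R S).
Proof.
move=> bS; rewrite inE => zS; apply/indepP => x y; rewrite !inE => xS yS.
apply/negP => exy; exact: (bip_triangle bS xS yS zS).
Qed.

End Join.

Theorem mainTheorem2 (T1 T2 : finType) (e1 : rel T1) (e2 : rel T2) :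
  simple_graph e1 -> simple_graph e2 ->
  has_edge e1 -> has_edge e2 ->
  (well_bicovered (join_rel e1 e2) <->
   [/\ well_covered e1, well_bicovered e1, well_covered e2, well_bicovered e2
     & [/\ bnum e1 = bnum e2, bnum e2 = 2 * alpha e1 & 2 * alpha e1 = 2 * alpha e2]]).
Proof.
move=> sg1 sg2 he1 he2.
have [sym1 irr1] := sg1; have [sym2 irr2] := sg2.
have [x1 _] := he1; have [x2 _] := he2.
have [Sb1 mSb1 cSb1] := exists_max (bip0 e1).
have [Sb2 mSb2 cSb2] := exists_max (bip0 e2).
have [I1 mI1 cI1] := exists_max (indep0 e1).
have [I2 mI2 cI2] := exists_max (indep0 e2).
change (#|I1| = alpha e1) in cI1; change (#|I2| = alpha e2) in cI2.
have le1 : bnum e1 <= 2 * alpha e1.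
  by rewrite /bnum -cSb1; apply: bip_le_alpha; case/maxsetP: mSb1.
have le2 : bnum e2 <= 2 * alpha e2.
  by rewrite /bnum -cSb2; apply: bip_le_alpha; case/maxsetP: mSb2.
split.
- move=> wbJ.
  have mb1 A : maxset (ind_bipartite e1) A ->
      maxset (ind_bipartite (join_rel e1 e2)) (U A set0).
    move=> mA; have niA := maxbip_not_indep sg1 he1 mA.
    case/maxsetP: mA => bA mA.
    apply/maxsetP; split; first exact: bip_from1.
    move=> B bB sB; have sL := subL sB.
    case: (eqVneq (R B) set0) => [R0|/set0Pn[z zR]].
      by rewrite (UE B) R0 (mA _ (bipJ_L bB) sL).
    by move: niA; rewrite (indep_sub sL (tri_L bB zR)).
  have mb2 A : maxset (ind_bipartite e2) A ->
      maxset (ind_bipartite (join_rel e1 e2)) (U set0 A).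
    move=> mA; have niA := maxbip_not_indep sg2 he2 mA.
    case/maxsetP: mA => bA mA.
    apply/maxsetP; split; first exact: bip_from2.
    move=> B bB sB; have sR := subR sB.
    case: (eqVneq (L B) set0) => [L0|/set0Pn[z zL]].
      by rewrite (UE B) L0 (mA _ (bipJ_R bB) sR).
    by move: niA; rewrite (indep_sub sR (tri_R bB zL)).
  have mi A1 A2 : maxset (independent e1) A1 -> maxset (independent e2) A2 ->
      maxset (ind_bipartite (join_rel e1 e2)) (U A1 A2).
    move=> m1 m2.
    have /set0Pn[a aA] := maxind_nonempty x1 irr1 m1.
    have /set0Pn[b bA] := maxind_nonempty x2 irr2 m2.
    case/maxsetP: m1 => i1 m1; case/maxsetP: m2 => i2 m2.
    apply/maxsetP; split; first exact: bip_from_ind.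
    move=> B bB sB; have sL := subL sB; have sR := subR sB.
    have iL := tri_L bB (subsetP sR _ bA).
    have iR := tri_R bB (subsetP sL _ aA).
    by rewrite (UE B) (m1 _ iL sL) (m2 _ iR sR).
  have eb1 : bnum e1 = bnum (join_rel e1 e2).
    by rewrite -(wbJ _ (mb1 _ mSb1)) cardU cards0 addn0 cSb1.
  have eb2 : bnum e2 = bnum (join_rel e1 e2).
    by rewrite -(wbJ _ (mb2 _ mSb2)) cardU cards0 add0n cSb2.
  have ea : alpha e1 + alpha e2 = bnum (join_rel e1 e2).
    by rewrite -(wbJ _ (mi _ _ mI1 mI2)) cardU cI1 cI2.
  have wc1 : well_covered e1.
    move=> A mA; have := wbJ _ (mi _ _ mA mI2); rewrite cardU cI2 -ea.
    lia.
  have wc2 : well_covered e2.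
    move=> A mA; have := wbJ _ (mi _ _ mI1 mA); rewrite cardU cI1 -ea.
    lia.
  split => //.
  + by move=> S mS; rewrite eb1 -(wbJ _ (mb1 _ mS)) cardU cards0 addn0.
  + by move=> S mS; rewrite eb2 -(wbJ _ (mb2 _ mS)) cardU cards0 add0n.
  + split; lia.
- case=> wc1 wb1 wc2 wb2 [eb12 eb2 ea].
  have H A1 A2 : maxset (ind_bipartite (join_rel e1 e2)) (U A1 A2) ->
      #|U A1 A2| = bnum e1.
    case/maxsetP => bS mS; rewrite cardU.
    case: (eqVneq A2 set0) => [A20|A2n0].
      rewrite A20 in bS mS *; rewrite cards0 addn0.
      have bA := bipJ_L bS; rewrite LU in bA.
      apply: wb1; apply/maxsetP; split => // B bB sAB.
      have := mS _ (bip_from1 e2 bB) (subU sAB (subxx _)).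
      by move/(congr1 (@L _ _)); rewrite !LU.
    case: (eqVneq A1 set0) => [A10|A1n0].
      rewrite A10 in bS mS *; rewrite cards0 add0n eb12.
      have bA := bipJ_R bS; rewrite RU in bA.
      apply: wb2; apply/maxsetP; split => // B bB sAB.
      have := mS _ (bip_from2 e1 bB) (subU (subxx _) sAB).
      by move/(congr1 (@R _ _)); rewrite !RU.
    have /set0Pn[a aA] := A1n0; have /set0Pn[b bA] := A2n0.
    have i1 := tri_L bS (z:=b); rewrite LU RU in i1; have {}i1 := i1 bA.
    have i2 := tri_R bS (z:=a); rewrite LU RU in i2; have {}i2 := i2 aA.
    rewrite (wc1 A1) ?(wc2 A2); first lia.
      apply/maxsetP; split => // B iB sAB.
      have := mS _ (bip_from_ind i1 iB) (subU (subxx _) sAB).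
      by move/(congr1 (@R _ _)); rewrite !RU.
    apply/maxsetP; split => // B iB sAB.
    have := mS _ (bip_from_ind iB i2) (subU sAB (subxx _)).
    by move/(congr1 (@L _ _)); rewrite !LU.
  have H' S : maxset (ind_bipartite (join_rel e1 e2)) S -> #|S| = bnum e1.
    by rewrite (UE S); apply: H.
  have [S0 mS0 cS0] := exists_max (bip0 (join_rel e1 e2)).
  move=> S mS; rewrite /bnum -cS0 H' // H' //.
Qed.
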